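(* Let $\mathcal{T}$ be an unweighted tree on $L$ vertices and let $f:\mathbb{N}\to\mathbb{R}$ be an arbitrary function. Then the mask matrix $\mathbf{M} = [f(\mathrm{dist}_{\mathcal{T}}(i,j))]_{i,j=1,\dots,L}$ supports matrix-vector multiplication in time $O(L\log^2 L)$. Consequently $(\mathcal{T}, f)$ is tractable.
   Context: $\mathrm{dist}_{\mathcal{T}}(i,j)$ is the number of edges on the path between $i$ and $j$. A pair $(\mathcal{T},f)$ is tractable if $\mathbf{M}\mathbf{x}$ can be computed for every $\mathbf{x}\in\mathbb{R}^L$ in $o(L^2)$ time. Values of $f$ are assumed available in $O(1)$ time each; time counts arithmetic operations. *)

(* Defs.v *)
From mathcomp Require Import all_boot.
From Stdlib Require Import Reals.

Set Implicit Arguments.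
Unset Strict Implicit.
Unset Printing Implicit Defensive.

Definition simple_graph (L : nat) (e : rel 'I_L) : Prop :=
  symmetric e /\ irreflexive e.

Definition acyclic (L : nat) (e : rel 'I_L) : Prop :=
  forall c : seq 'I_L, uniq c -> 2 < size c -> ~~ cycle e c.

Definition is_tree (L : nat) (e : rel 'I_L) : Prop :=
  0 < L /\ simple_graph e /\ (forall i j, connect e i j) /\ acyclic e.

Definition walk_len (L : nat) (e : rel 'I_L) (i j : 'I_L) (n : nat) : bool :=
  [exists p : n.-tuple 'I_L, path e i p && (last i p == j)].

(* dist_T(i,j): the number of edges of the (shortest, in a tree: unique) path
   from i to j; in a connected graph on L vertices it is < L. *)
Definition tree_dist (L : nat) (e : rel 'I_L) (i j : 'I_L) : nat :=
  find (walk_len e i j) (iota 0 L).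

Inductive instr (L : nat) : Type :=
  | IInput of 'I_L
  | IQuery of nat           (* read f(k), O(1) oracle access *)
  | IConst of R
  | IAdd of nat & nat
  | ISub of nat & nat
  | IMul of nat & nat
  | IDiv of nat & nat.

Section Run.
Variables (L : nat) (f : nat -> R) (x : 'I_L -> R).

Definition reg (vals : seq R) (a : nat) : R := nth 0%R vals a.

Definition step (vals : seq R) (ins : instr L) : R :=
  match ins with
  | IInput i => x i
  | IQuery k => f k
  | IConst c => c
  | IAdd a b => Rplus (reg vals a) (reg vals b)
  | ISub a b => Rminus (reg vals a) (reg vals b)
  | IMul a b => Rmult (reg vals a) (reg vals b)
  | IDiv a b => Rdiv (reg vals a) (reg vals b)
  end.

Fixpoint run_aux (vals : seq R) (p : seq (instr L)) : seq R :=
  match p with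
  | [::] => vals
  | ins :: p' => run_aux (rcons vals (step vals ins)) p'
  end.

Definition run (p : seq (instr L)) : seq R := run_aux [::] p.
End Run.

Record slp (L : nat) := SLP { instrs : seq (instr L); outs : 'I_L -> nat }.

Definition cost (L : nat) (P : slp L) : nat := size (instrs P).

Definition mask_mv (L : nat) (e : rel 'I_L) (f : nat -> R) (x : 'I_L -> R)
    (i : 'I_L) : R :=
  \big[Rplus/0%R]_(j < L) Rmult (f (tree_dist e i j)) (x j).

Definition computes_mask_mv (L : nat) (e : rel 'I_L) (P : slp L) : Prop :=
  forall (f : nat -> R) (x : 'I_L -> R) (i : 'I_L),
    reg (run f x (instrs P)) (outs P i) = mask_mv e f x i.

(* Tractability: M x computable in o(L^2) operations, for every tree on L
   vertices and every f. *)
Definition tractable_trees : Prop :=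
  exists g : nat -> nat,
    (forall k, 0 < k -> exists N, forall L, N <= L -> k * g L <= L ^ 2) /\
    (forall L (e : rel 'I_L), is_tree e ->
       exists P : slp L, computes_mask_mv e P /\ cost P <= g L).

(* Main.v *)
Require Import Defs.
From mathcomp Require Import all_boot.
From Stdlib Require Import Reals.
From mathcomp Require Import all_algebra complex Rstruct.
From mathcomp Require Import zify ring lra.
Import ssrnat.
Set Implicit Arguments.
Unset Strict Implicit.
Unset Printing Implicit Defensive.
Import GRing.Theory Num.Theory.
Local Open Scope ring_scope.
Local Open Scope complex_scope.

Notation cRe := (@complex.Re R).
Notation cIm := (@complex.Im R).

Section SLP.
Variable L : nat.
Implicit Types (p q : seq (instr L)).

Definition Sem := (nat -> R) -> ('I_L -> R) -> R.
Definition CSem := (nat -> R) -> ('I_L -> R) -> R[i].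

Lemma size_run_aux f x vals p : size (run_aux f x vals p) = (size vals + size p)%N.
Proof.
elim: p vals => [|i p IH] vals /=; first by rewrite addn0.
by rewrite IH size_rcons addSnnS.
Qed.

Lemma run_aux_cat f x vals p q :
  run_aux f x vals (p ++ q) = run_aux f x (run_aux f x vals p) q.
Proof. by elim: p vals => //= i p IH vals. Qed.

Lemma nth_run_aux f x vals p r : (r < size vals)%N ->
  nth 0 (run_aux f x vals p) r = nth 0 vals r.
Proof.
elim: p vals => //= i p IH vals Hr.
by rewrite IH ?size_rcons ?nth_rcons ?Hr // ltnW.
Qed.

Definition holds p r (v : Sem) :=
  (r < size p)%N /\ forall f x, reg (run f x p) r = v f x.

Lemma holds_cat p q r v : holds p r v -> holds (p ++ q) r v.
Proof.
case=> Hr H; split; first by rewrite size_cat ltn_addr.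
move=> f x; rewrite /reg /run run_aux_cat nth_run_aux ?size_run_aux //; exact: H.
Qed.

Lemma holds_r p i r v : holds p r v -> holds (rcons p i) r v.
Proof. by rewrite -cats1; apply: holds_cat. Qed.

Lemma holds_ext p r v v' : holds p r v -> (forall f x, v f x = v' f x) -> holds p r v'.
Proof. by case=> H1 H2 H; split=> // f x; rewrite H2. Qed.

Lemma run_rcons f x p i :
  run f x (rcons p i) = rcons (run f x p) (step f x (run f x p) i).
Proof. by rewrite /run -cats1 run_aux_cat. Qed.

Lemma holds_emit p i (v : Sem) :
  (forall f x, step f x (run f x p) i = v f x) -> holds (rcons p i) (size p) v.
Proof.
move=> H; split; first by rewrite size_rcons.
move=> f x; rewrite run_rcons /reg nth_rcons size_run_aux add0n ltnn eqxx; exact: H.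
Qed.

Lemma emit_input p j (v : Sem) : (forall f x, v f x = x j) ->
  holds (rcons p (IInput j)) (size p) v.
Proof. by move=> H; apply: holds_emit => f x /=; rewrite H. Qed.

Lemma emit_query p k (v : Sem) : (forall f x, v f x = f k) ->
  holds (rcons p (IQuery L k)) (size p) v.
Proof. by move=> H; apply: holds_emit => f x /=; rewrite H. Qed.

Lemma emit_const p c (v : Sem) : (forall f x, v f x = c) ->
  holds (rcons p (IConst L c)) (size p) v.
Proof. by move=> H; apply: holds_emit => f x /=; rewrite H. Qed.

Lemma emit_add p a b va vb (v : Sem) : holds p a va -> holds p b vb ->
  (forall f x, v f x = va f x + vb f x) ->
  holds (rcons p (IAdd L a b)) (size p) v.
Proof.
move=> [_ Ha] [_ Hb] H; apply: holds_emit => f x /=.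
by rewrite /reg in Ha Hb; rewrite /reg Ha Hb H.
Qed.

Lemma emit_sub p a b va vb (v : Sem) : holds p a va -> holds p b vb ->
  (forall f x, v f x = va f x - vb f x) ->
  holds (rcons p (ISub L a b)) (size p) v.
Proof.
move=> [_ Ha] [_ Hb] H; apply: holds_emit => f x /=.
by rewrite /reg in Ha Hb; rewrite /reg Ha Hb H.
Qed.

Lemma emit_mul p a b va vb (v : Sem) : holds p a va -> holds p b vb ->
  (forall f x, v f x = va f x * vb f x) ->
  holds (rcons p (IMul L a b)) (size p) v.
Proof.
move=> [_ Ha] [_ Hb] H; apply: holds_emit => f x /=.
by rewrite /reg in Ha Hb; rewrite /reg Ha Hb H.
Qed.

Lemma build_loop (A : Type) (m : nat) (c : nat -> nat)
  (Inv : seq (instr L) -> Prop) (Out : nat -> A -> seq (instr L) -> Prop) :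
  (forall p q, Inv p -> Inv (p ++ q)) ->
  (forall t o p q, Out t o p -> Out t o (p ++ q)) ->
  (forall t p, (t < m)%N -> Inv p -> exists q o, Out t o (p ++ q) /\ (size q <= c t)%N) ->
  forall (a0 : A) p, Inv p -> exists q (o : nat -> A),
    (forall t, (t < m)%N -> Out t (o t) (p ++ q)) /\ (size q <= \sum_(t < m) c t)%N.
Proof.
move=> HI HO Hs a0; elim: m Hs => [|m IH] Hs p Hp.
  by exists [::], (fun _ => a0); split=> // t.
have [q1 [o1 [H1 S1]]] := IH (fun t p Ht => Hs t p (leq_trans Ht (leqnSn m))) p Hp.
have [q2 [o2 [H2 S2]]] := Hs m (p ++ q1) (ltnSn m) (HI _ _ Hp).
exists (q1 ++ q2), (fun t => if t == m then o2 else o1 t); split.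
  move=> t; rewrite ltnS leq_eqVlt => /orP [/eqP ->|Ht]; first by rewrite eqxx catA.
  by rewrite (ltn_eqF Ht) catA; apply: HO; apply: H1.
by rewrite size_cat big_ord_recr /= leq_add.
Qed.

Definition cholds p (r : nat * nat) (z : CSem) :=
  holds p r.1 (fun f x => cRe (z f x)) /\ holds p r.2 (fun f x => cIm (z f x)).

Lemma cholds_cat p q r z : cholds p r z -> cholds (p ++ q) r z.
Proof. by case=> H1 H2; split; apply: holds_cat. Qed.

Lemma cholds_r p i r z : cholds p r z -> cholds (rcons p i) r z.
Proof. by case=> H1 H2; split; apply: holds_r. Qed.

Lemma cholds_ext p r z z' : cholds p r z -> (forall f x, z f x = z' f x) -> cholds p r z'.
Proof.
by case=> H1 H2 H; split; [apply: holds_ext H1 _|apply: holds_ext H2 _] => f x; rewrite H.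
Qed.

Lemma cadd_ok p r1 r2 z1 z2 : cholds p r1 z1 -> cholds p r2 z2 ->
  exists q r, cholds (p ++ q) r (fun f x => z1 f x + z2 f x) /\ size q = 2%N.
Proof.
move=> [A1 B1] [A2 B2].
exists [:: IAdd L r1.1 r2.1; IAdd L r1.2 r2.2], (size p, (size p).+1); split=> //.
rewrite -cat_rcons cats1; split.
  apply: holds_r; apply: emit_add A1 A2 _ => f x /=.
  by case: (z1 f x) => a b; case: (z2 f x).
rewrite /= (_ : (size p).+1 = size (rcons p (IAdd L r1.1 r2.1))); last by rewrite size_rcons.
apply: emit_add (holds_r _ B1) (holds_r _ B2) _ => f x /=.
by case: (z1 f x) => a b; case: (z2 f x).
Qed.


Lemma X_add p a b va vb : holds p a va -> holds p b vb ->
  exists q r, holds (p ++ q) r (fun f x => va f x + vb f x) /\ size q = 1%N.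
Proof. move=> Ha Hb; exists [:: IAdd L a b], (size p); rewrite cats1; split=> //; exact: emit_add Ha Hb _. Qed.
Lemma X_sub p a b va vb : holds p a va -> holds p b vb ->
  exists q r, holds (p ++ q) r (fun f x => va f x - vb f x) /\ size q = 1%N.
Proof. move=> Ha Hb; exists [:: ISub L a b], (size p); rewrite cats1; split=> //; exact: emit_sub Ha Hb _. Qed.
Lemma X_mul p a b va vb : holds p a va -> holds p b vb ->
  exists q r, holds (p ++ q) r (fun f x => va f x * vb f x) /\ size q = 1%N.
Proof. move=> Ha Hb; exists [:: IMul L a b], (size p); rewrite cats1; split=> //; exact: emit_mul Ha Hb _. Qed.
Lemma X_const p c :
  exists q r, holds (p ++ q) r (fun _ _ => c) /\ size q = 1%N.
Proof. exists [:: IConst L c], (size p); rewrite cats1; split=> //; exact: emit_const. Qed.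
Lemma X_query p k :
  exists q r, holds (p ++ q) r (fun f _ => f k) /\ size q = 1%N.
Proof. exists [:: IQuery L k], (size p); rewrite cats1; split=> //; exact: emit_query. Qed.
Lemma X_input p j :
  exists q r, holds (p ++ q) r (fun _ x => x j) /\ size q = 1%N.
Proof. exists [:: IInput j], (size p); rewrite cats1; split=> //; exact: emit_input. Qed.

Lemma csub_ok p r1 r2 z1 z2 : cholds p r1 z1 -> cholds p r2 z2 ->
  exists q r, cholds (p ++ q) r (fun f x => z1 f x - z2 f x) /\ size q = 2%N.
Proof.
move=> [A1 B1] [A2 B2].
have [q1 [s1 [H1 S1]]] := X_sub A1 A2.
have [q2 [s2 [H2 S2]]] := X_sub (holds_cat q1 B1) (holds_cat q1 B2).
exists (q1 ++ q2), (s1, s2); rewrite catA size_cat S1 S2; split=> //; split.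
  apply: holds_ext (holds_cat q2 H1) _ => f x /=.
  by case: (z1 f x) => a b; case: (z2 f x).
apply: holds_ext H2 _ => f x /=.
by case: (z1 f x) => a b; case: (z2 f x).
Qed.

Lemma cmulc_ok p r z (w : R[i]) : cholds p r z ->
  exists q r', cholds (p ++ q) r' (fun f x => w * z f x) /\ size q = 8%N.
Proof.
case: w => c d; move=> [A B].
have [q1 [c1 [H1 S1]]] := X_const p c.
have [q2 [c2 [H2 S2]]] := X_const (p ++ q1) d.
set p2 := (p ++ q1) ++ q2.
have A' : holds p2 r.1 (fun f x => cRe (z f x)) by do 2 apply: holds_cat.
have B' : holds p2 r.2 (fun f x => cIm (z f x)) by do 2 apply: holds_cat.
have H1' : holds p2 c1 (fun _ _ => c) by apply: holds_cat.
have [q3 [m1 [H3 S3]]] := X_mul A' H1'.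
have [q4 [m2 [H4 S4]]] := X_mul (holds_cat q3 B') (holds_cat q3 H2).
have [q5 [m3 [H5 S5]]] := X_sub (holds_cat q4 H3) H4.
set p5 := ((p2 ++ q3) ++ q4) ++ q5.
have A5 : holds p5 r.1 (fun f x => cRe (z f x)) by do 3 apply: holds_cat.
have B5 : holds p5 r.2 (fun f x => cIm (z f x)) by do 3 apply: holds_cat.
have C15 : holds p5 c1 (fun _ _ => c) by do 3 apply: holds_cat.
have C25 : holds p5 c2 (fun _ _ => d) by do 3 apply: holds_cat.
have [q7 [m5 [H7 S7]]] := X_mul A5 C25.
have [q8 [m6 [H8 S8]]] := X_mul (holds_cat q7 B5) (holds_cat q7 C15).
have [q9 [m7 [H9 S9]]] := X_add (holds_cat q8 H7) H8.
exists (q1 ++ q2 ++ q3 ++ q4 ++ q5 ++ q7 ++ q8 ++ q9), (m3, m7).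
rewrite !size_cat S1 S2 S3 S4 S5 S7 S8 S9; split=> //.
have -> : p ++ q1 ++ q2 ++ q3 ++ q4 ++ q5 ++ q7 ++ q8 ++ q9 = ((p5 ++ q7) ++ q8) ++ q9.
  by rewrite /p5 /p2 !catA.
split.
  apply: holds_ext (holds_cat _ (holds_cat _ (holds_cat _ H5))) _ => f x /=.
  by case: (z f x) => a b /=; ring.
apply: holds_ext H9 _ => f x /=.
by case: (z f x) => a b /=; ring.
Qed.

Lemma cmul_ok p r1 r2 z1 z2 : cholds p r1 z1 -> cholds p r2 z2 ->
  exists q r, cholds (p ++ q) r (fun f x => z1 f x * z2 f x) /\ size q = 6%N.
Proof.
move=> [A1 B1] [A2 B2].
have [q1 [m1 [H1 S1]]] := X_mul A1 A2.
have [q2 [m2 [H2 S2]]] := X_mul (holds_cat q1 B1) (holds_cat q1 B2).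
have [q3 [m3 [H3 S3]]] := X_sub (holds_cat q2 H1) H2.
set p3 := ((p ++ q1) ++ q2) ++ q3.
have A1' : holds p3 r1.1 (fun f x => cRe (z1 f x)) by do 3 apply: holds_cat.
have B1' : holds p3 r1.2 (fun f x => cIm (z1 f x)) by do 3 apply: holds_cat.
have A2' : holds p3 r2.1 (fun f x => cRe (z2 f x)) by do 3 apply: holds_cat.
have B2' : holds p3 r2.2 (fun f x => cIm (z2 f x)) by do 3 apply: holds_cat.
have [q4 [m4 [H4 S4]]] := X_mul A1' B2'.
have [q5 [m5 [H5 S5]]] := X_mul (holds_cat q4 B1') (holds_cat q4 A2').
have [q6 [m6 [H6 S6]]] := X_add (holds_cat q5 H4) H5.
exists (q1 ++ q2 ++ q3 ++ q4 ++ q5 ++ q6), (m3, m6).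
rewrite !size_cat S1 S2 S3 S4 S5 S6; split=> //.
have -> : p ++ q1 ++ q2 ++ q3 ++ q4 ++ q5 ++ q6 = ((p3 ++ q4) ++ q5) ++ q6.
  by rewrite /p3 !catA.
split.
  apply: holds_ext (holds_cat _ (holds_cat _ (holds_cat _ H3))) _ => f x /=.
  by case: (z1 f x) => a b; case: (z2 f x) => c d /=.
apply: holds_ext H6 _ => f x /=.
by case: (z1 f x) => a b; case: (z2 f x) => c d /=.
Qed.

Lemma bfly_ok p rE rO zE zO (w : R[i]) : cholds p rE zE -> cholds p rO zO ->
  exists q r1 r2, cholds (p ++ q) r1 (fun f x => zE f x + w * zO f x) /\
    cholds (p ++ q) r2 (fun f x => zE f x - w * zO f x) /\ size q = 12%N.
Proof.
move=> HE HO.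
have [q1 [s1 [H1 S1]]] := cmulc_ok w HO.
have [q2 [s2 [H2 S2]]] := cadd_ok (cholds_cat q1 HE) H1.
have [q3 [s3 [H3 S3]]] := csub_ok (cholds_cat q2 (cholds_cat q1 HE)) (cholds_cat q2 H1).
exists (q1 ++ q2 ++ q3), s2, s3; rewrite !size_cat S1 S2 S3 !catA; split=> //.
exact: cholds_cat.
Qed.

End SLP.

Lemma sum_split (F : nat -> R[i]) m :
  \sum_(t < 2 * m) F t = \sum_(t < m) F (2 * t)%N + \sum_(t < m) F (2 * t).+1.
Proof.
elim: m => [|m IH]; first by rewrite muln0 !big_ord0 addr0.
rewrite (_ : (2 * m.+1 = (2 * m).+2)%N); last by lia.
rewrite !big_ord_recr /= IH; ring.
Qed.

Lemma expr_shift (w : R[i]) m j n : w ^+ m = -1 ->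
  w ^+ ((j + m) * n) = w ^+ (j * n) * (-1) ^+ n.
Proof. by move=> Hm; rewrite mulnDl exprD [w ^+ (m * n)]exprM Hm. Qed.

Lemma sgn_even n : (-1 : R[i]) ^+ (2 * n) = 1.
Proof. by rewrite exprM expr2 mulrNN mulr1 expr1n. Qed.

Lemma sgn_odd n : (-1 : R[i]) ^+ (2 * n).+1 = -1.
Proof. by rewrite exprS sgn_even mulr1. Qed.

Lemma fft_even (w : R[i]) j t : w ^+ (j * (2 * t)) = (w ^+ 2) ^+ (j * t).
Proof. by rewrite mulnCA exprM. Qed.

Lemma fft_odd (w : R[i]) j t : w ^+ (j * (2 * t).+1) = w ^+ j * (w ^+ 2) ^+ (j * t).
Proof. by rewrite mulnS exprD fft_even. Qed.

Lemma fft_math1 (z : nat -> R[i]) (w : R[i]) m j :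
  \sum_(t < 2 * m) z t * w ^+ (j * t) =
  \sum_(t < m) z (2 * t)%N * (w ^+ 2) ^+ (j * t) +
  w ^+ j * \sum_(t < m) z (2 * t).+1 * (w ^+ 2) ^+ (j * t).
Proof.
rewrite (sum_split (fun t => z t * w ^+ (j * t))) mulr_sumr.
congr (_ + _); apply: eq_bigr => t _; rewrite ?fft_even ?fft_odd; ring.
Qed.

Lemma fft_math2 (z : nat -> R[i]) (w : R[i]) m j : w ^+ m = -1 ->
  \sum_(t < 2 * m) z t * w ^+ ((j + m) * t) =
  \sum_(t < m) z (2 * t)%N * (w ^+ 2) ^+ (j * t) -
  w ^+ j * \sum_(t < m) z (2 * t).+1 * (w ^+ 2) ^+ (j * t).
Proof.
move=> Hm.
rewrite (sum_split (fun t => z t * w ^+ ((j + m) * t))) mulr_sumr -sumrN.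
congr (_ + _); apply: eq_bigr => t _; rewrite expr_shift //.
  by rewrite sgn_even fft_even mulr1.
by rewrite sgn_odd fft_odd; ring.
Qed.

Section FFT.
Variable L : nat.

Lemma fft k : forall (w : R[i]), ((0 < k)%N -> w ^+ (2 ^ k.-1) = -1) ->
  forall (p : seq (instr L)) (inp : nat -> nat * nat) (z : nat -> CSem L),
  (forall t, (t < 2 ^ k)%N -> cholds p (inp t) (z t)) ->
  exists q (out : nat -> nat * nat),
    (forall j, (j < 2 ^ k)%N -> cholds (p ++ q) (out j)
        (fun f x => \sum_(t < 2 ^ k) z t f x * w ^+ (j * t))) /\
    (size q <= 6 * k * 2 ^ k)%N.
Proof.
elim: k => [|k IH] w Hw p inp z Hin.
  exists [::], inp; rewrite cats0; split=> // j; rewrite expn0 ltnS leqn0 => /eqP ->.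
  by apply: cholds_ext (Hin 0%N isT) _ => f x; rewrite big_ord1 /= mul0n expr0 mulr1.
have Em : (2 ^ k.+1 = 2 * 2 ^ k)%N by rewrite expnS.
have Hwm : w ^+ (2 ^ k) = -1 by apply: Hw.
have Hw2 : (0 < k)%N -> (w ^+ 2) ^+ (2 ^ k.-1) = -1.
  case: k {IH Em Hin Hwm} Hw => // k Hw _; rewrite -exprM -expnS; exact: Hw.
have Hlt1 : forall t, (t < 2 ^ k -> 2 * t < 2 ^ k.+1)%N by move=> t; rewrite Em; lia.
have Hlt2 : forall t, (t < 2 ^ k -> (2 * t).+1 < 2 ^ k.+1)%N by move=> t; rewrite Em; lia.
have [q1 [oe [He S1]]] := IH (w ^+ 2) Hw2 p (fun t => inp (2 * t)%N)
   (fun t => z (2 * t)%N) (fun t Ht => Hin _ (Hlt1 t Ht)).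
have [q2 [oo [Ho S2]]] := IH (w ^+ 2) Hw2 (p ++ q1) (fun t => inp (2 * t).+1)
   (fun t => z (2 * t).+1) (fun t Ht => cholds_cat q1 (Hin _ (Hlt2 t Ht))).
pose E j : CSem L := fun f x => \sum_(t < 2 ^ k) z (2 * t)%N f x * (w ^+ 2) ^+ (j * t).
pose O j : CSem L := fun f x => \sum_(t < 2 ^ k) z (2 * t).+1 f x * (w ^+ 2) ^+ (j * t).
pose Inv (p' : seq (instr L)) := forall j, (j < 2 ^ k)%N ->
   cholds p' (oe j) (E j) /\ cholds p' (oo j) (O j).
pose Out j (o : (nat * nat) * (nat * nat)) (p' : seq (instr L)) :=
   cholds p' o.1 (fun f x => E j f x + w ^+ j * O j f x) /\
   cholds p' o.2 (fun f x => E j f x - w ^+ j * O j f x).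
have HI : forall p' q, Inv p' -> Inv (p' ++ q).
  by move=> p' q H j Hj; have [H1 H2] := H j Hj; split; apply: cholds_cat.
have HO : forall t o p' q, Out t o p' -> Out t o (p' ++ q).
  by move=> t o p' q [H1 H2]; split; apply: cholds_cat.
have Hs : forall t p', (t < 2 ^ k)%N -> Inv p' ->
    exists q o, Out t o (p' ++ q) /\ (size q <= (fun _ => 12%N) t)%N.
  move=> t p' Ht Hp; have [H1 H2] := Hp t Ht.
  have [q [r1 [r2 [B1 [B2 Sq]]]]] := bfly_ok (w ^+ t) H1 H2.
  by exists q, (r1, r2); rewrite Sq.
have Hinv : Inv ((p ++ q1) ++ q2).
  by move=> j Hj; split; [apply: cholds_cat; apply: He | apply: Ho].
have [q3 [o [Hl S3]]] := build_loop HI HO Hs ((0, 0), (0, 0))%N Hinv.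
exists (q1 ++ q2 ++ q3), (fun j => if (j < 2 ^ k)%N then (o j).1 else (o (j - 2 ^ k)%N).2).
split; last first.
  rewrite !size_cat; rewrite sum_nat_const card_ord in S3.
  rewrite Em; nia.
move=> j Hj; rewrite !catA.
case: ifP => Hjk.
  have [H1 _] := Hl j Hjk.
  apply: cholds_ext H1 _ => f x; rewrite Em (fft_math1 (fun t => z t f x)) //.
have Hj' : (j - 2 ^ k < 2 ^ k)%N by move: Hj; rewrite Em; lia.
have [_ H2] := Hl _ Hj'.
apply: cholds_ext H2 _ => f x.
have Hle : (2 ^ k <= j)%N by rewrite leqNgt Hjk.
have H := @fft_math2 (fun t => z t f x) w (2 ^ k) (j - 2 ^ k) Hwm.
rewrite subnK // /= in H; by rewrite Em H.
Qed.

End FFT.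

Lemma root_exists k : exists w : R[i], w ^+ (2 ^ k) = -1.
Proof.
elim: k => [|k [w Hw]]; first by exists (-1); rewrite expn0 expr1.
exists (sqrtC w); by rewrite expnS exprM sqrtCK.
Qed.

Lemma neg1_neq1 : (-1 : R[i]) != 1.
Proof.
apply/eqP => H.
have : (2%:R : R[i]) == 0 by rewrite -[2%N]/(1 + 1)%N natrD -{1}H addNr.
by rewrite pnatr_eq0.
Qed.

Lemma prim_root k (w : R[i]) : w ^+ (2 ^ k) = -1 -> (2 ^ k.+1).-primitive_root w.
Proof.
move=> Hw.
have Hn : w ^+ (2 ^ k.+1) = 1.
  by rewrite expnS mulnC exprM Hw expr2 mulrNN mulr1.
have [m Hm Hdvd] := prim_order_exists (expn_gt0 2 k.+1) Hn.
have [s Hs Es] := dvdn_pfactor m k.+1 (isT : prime 2) Hdvd.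
have [Hlt|Hge] := ltnP s k.+1; last first.
  have Es' : s = k.+1 by apply/eqP; rewrite eqn_leq Hs Hge.
  by rewrite -Es' -Es.
exfalso; have : (m %| 2 ^ k)%N by rewrite Es dvdn_Pexp2l.
by rewrite (prim_order_dvd Hm) Hw (negbTE neg1_neq1).
Qed.

Lemma ortho k (w : R[i]) s r t : w ^+ (2 ^ k) = -1 -> (t < 2 ^ k.+1)%N ->
  \sum_(j < 2 ^ k.+1) w ^+ (j * s) * w ^+ (j * r) * (w^-1) ^+ (t * j) =
  if ((s + r) %% 2 ^ k.+1 == t)%N then (2 ^ k.+1)%:R else 0.
Proof.
move=> Hw Ht; set n := (2 ^ k.+1)%N.
have Hp := prim_root Hw.
have Hw0 : w != 0 by rewrite (prim_root_eq0 Hp) expn_eq0.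
set x := w ^+ (s + r) * w^-1 ^+ t.
have -> : \sum_(j < n) w ^+ (j * s) * w ^+ (j * r) * w^-1 ^+ (t * j) =
          \sum_(j < n) x ^+ j.
  apply: eq_bigr => j _; rewrite /x exprMn -!exprM -exprD -mulnDr.
  by rewrite [(j * (s + r))%N]mulnC.
case: ifP => Hc.
  have -> : x = 1.
    rewrite /x -(prim_expr_mod Hp) (eqP Hc) exprVn mulrV // unitfE expf_neq0 //.
  by rewrite (eq_bigr (fun _ => 1)) => [|j _]; rewrite ?expr1n // sumr_const card_ord.
have Hx1 : x != 1.
  apply/eqP; rewrite /x exprVn => /(canRL (mulrVK _)) .
  rewrite mul1r unitfE expf_neq0 // => /(_ isT) /eqP.
  rewrite (eq_prim_root_expr Hp) => /eqP Hm.
  by move: Hc; rewrite Hm modn_small // eqxx.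
have Hxn : x ^+ n = 1.
  rewrite /x exprMn -!exprM exprVn !(mulnC _ n) !exprM (prim_expr_order Hp).
  by rewrite !expr1n invr1 mulr1.
have := subrX1 x n; rewrite Hxn subrr => /esym /eqP.
by rewrite mulf_eq0 subr_eq0 (negbTE Hx1) /= => /eqP.
Qed.

Lemma conv_math k (w : R[i]) (U V : nat -> R) t : w ^+ (2 ^ k) = -1 ->
  (t < 2 ^ k.+1)%N ->
  \sum_(j < 2 ^ k.+1) ((\sum_(s < 2 ^ k.+1) (U s)%:C * w ^+ (j * s)) *
                       (\sum_(r < 2 ^ k.+1) (V r)%:C * w ^+ (j * r))) * (w^-1) ^+ (t * j)
  = (2 ^ k.+1)%:R * (\sum_(s < 2 ^ k.+1) \sum_(r < 2 ^ k.+1)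
       (if ((s + r) %% 2 ^ k.+1 == t)%N then U s * V r else 0))%:C.
Proof.
move=> Hw Ht; set n := (2 ^ k.+1)%N.
transitivity (\sum_(j < n) \sum_(s < n) \sum_(r < n)
   (U s * V r)%:C * (w ^+ (j * s) * w ^+ (j * r) * w^-1 ^+ (t * j))).
  apply: eq_bigr => j _; rewrite -mulrA big_distrl /=; apply: eq_bigr => s _.
  rewrite big_distrl big_distrr /=; apply: eq_bigr => r _; rewrite rmorphM /=; ring.
rewrite exchange_big /=.
transitivity (\sum_(s < n) \sum_(r < n) (U s * V r)%:C *
   \sum_(j < n) (w ^+ (j * s) * w ^+ (j * r) * w^-1 ^+ (t * j))).
  apply: eq_bigr => s _; rewrite exchange_big /=; apply: eq_bigr => r _.
  by rewrite big_distrr.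
rewrite rmorph_sum big_distrr /=; apply: eq_bigr => s _.
rewrite rmorph_sum big_distrr /=; apply: eq_bigr => r _.
rewrite ortho //; case: ifP => _; last by rewrite mulr0 mulr0.
by rewrite mulrC.
Qed.

Section Conv.
Variable L : nat.

Lemma Re_natC (m : nat) (y : R) : cRe ((m%:R : R[i]) * y%:C) = m%:R * y.
Proof. by rewrite -(rmorph_nat (real_complex R)) -rmorphM. Qed.

Lemma conv_build k (p : seq (instr L)) (a b : nat -> nat) (u v : nat -> Sem L) :
  (forall t, (t < 2 ^ k.+1)%N -> holds p (a t) (u t)) ->
  (forall t, (t < 2 ^ k.+1)%N -> holds p (b t) (v t)) ->
  exists q (o : nat -> nat), (forall t, (t < 2 ^ k.+1)%N -> holds (p ++ q) (o t)
     (fun f x => \sum_(s < 2 ^ k.+1) \sum_(r < 2 ^ k.+1)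
        (if ((s + r) %% 2 ^ k.+1 == t)%N then u s f x * v r f x else 0)))
   /\ (size q <= 18 * k.+1 * 2 ^ k.+1 + 7 * 2 ^ k.+1 + 2)%N.
Proof.
move=> Ha Hb; set n := (2 ^ k.+1)%N.
have [w Hw] := root_exists k.
have Hw' : (0 < k.+1)%N -> w ^+ (2 ^ k.+1.-1) = -1 by [].
have [q0 [z0 [H0 S0]]] := X_const p 0.
set p1 := p ++ q0.
have HA : forall t, (t < n)%N -> cholds p1 (a t, z0) (fun f x => (u t f x)%:C).
  move=> t Ht; split; [apply: holds_ext (holds_cat q0 (Ha t Ht)) _ |
                       apply: holds_ext H0 _] => //.
have HB : forall t, (t < n)%N -> cholds p1 (b t, z0) (fun f x => (v t f x)%:C).
  move=> t Ht; split; [apply: holds_ext (holds_cat q0 (Hb t Ht)) _ |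
                       apply: holds_ext H0 _] => //.
have [q1 [oA [HoA S1]]] := @fft L k.+1 w Hw' p1 _ _ HA.
have [q2 [oB [HoB S2]]] := @fft L k.+1 w Hw' (p1 ++ q1) _ _
   (fun t Ht => cholds_cat q1 (HB t Ht)).
set Ah := fun j (f : nat -> R) (x : 'I_L -> R) =>
   \sum_(t < n) (u t f x)%:C * w ^+ (j * t).
set Bh := fun j (f : nat -> R) (x : 'I_L -> R) =>
   \sum_(t < n) (v t f x)%:C * w ^+ (j * t).
pose Inv (p' : seq (instr L)) := forall j, (j < n)%N ->
   cholds p' (oA j) (Ah j) /\ cholds p' (oB j) (Bh j).
pose Out j (r : nat * nat) (p' : seq (instr L)) :=
   cholds p' r (fun f x => Ah j f x * Bh j f x).
have HI : forall p' q, Inv p' -> Inv (p' ++ q).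
  by move=> p' q H j Hj; have [H1 H2] := H j Hj; split; apply: cholds_cat.
have HO : forall t o p' q, Out t o p' -> Out t o (p' ++ q).
  by move=> t o p' q H; apply: cholds_cat.
have Hs : forall t p', (t < n)%N -> Inv p' ->
    exists q o, Out t o (p' ++ q) /\ (size q <= (fun _ => 6%N) t)%N.
  move=> t p' Ht Hp; have [H1 H2] := Hp t Ht.
  have [q [r [B1 Sq]]] := cmul_ok H1 H2.
  by exists q, r; rewrite Sq.
have Hinv : Inv ((p1 ++ q1) ++ q2).
  by move=> j Hj; split; [apply: cholds_cat; apply: HoA | apply: HoB].
have [q3 [oC [HoC S3]]] := build_loop HI HO Hs (0, 0)%N Hinv.
have Hw'' : (0 < k.+1)%N -> w^-1 ^+ (2 ^ k.+1.-1) = -1.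
  by move=> _; rewrite exprVn /= Hw invrN1.
have [q4 [oD [HoD S4]]] := @fft L k.+1 w^-1 Hw'' (((p1 ++ q1) ++ q2) ++ q3) _ _ HoC.
set p4 := ((((p1 ++ q1) ++ q2) ++ q3) ++ q4).
have [q5 [ci [H5 S5]]] := X_const p4 (n%:R^-1).
set Dv := fun t (f : nat -> R) (x : 'I_L -> R) =>
   \sum_(j < n) (Ah j f x * Bh j f x) * w^-1 ^+ (t * j).
pose Inv2 (p' : seq (instr L)) := holds p' ci (fun _ _ => n%:R^-1) /\ forall t, (t < n)%N ->
   holds p' (oD t).1 (fun f x => cRe (Dv t f x)).
pose Out2 t (r : nat) (p' : seq (instr L)) :=
   holds p' r (fun f x => cRe (Dv t f x) * n%:R^-1).
have HI2 : forall p' q, Inv2 p' -> Inv2 (p' ++ q).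
  by move=> p' q [H1 H2]; split; [apply: holds_cat|move=> t Ht; apply: holds_cat; apply: H2].
have HO2 : forall t o p' q, Out2 t o p' -> Out2 t o (p' ++ q).
  by move=> t o p' q H; apply: holds_cat.
have Hs2 : forall t p', (t < n)%N -> Inv2 p' ->
    exists q o, Out2 t o (p' ++ q) /\ (size q <= (fun _ => 1%N) t)%N.
  move=> t p' Ht [H1 H2].
  have [q [r [B1 Sq]]] := X_mul (H2 t Ht) H1.
  by exists q, r; rewrite Sq.
have Hinv2 : Inv2 (p4 ++ q5).
  split=> // t Ht; apply: holds_cat; exact: (proj1 (HoD t Ht)).
have [q6 [oE [HoE S6]]] := build_loop HI2 HO2 Hs2 0%N Hinv2.
exists (q0 ++ q1 ++ q2 ++ q3 ++ q4 ++ q5 ++ q6), oE; split.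
  move=> t Ht; have := HoE t Ht; rewrite /p4 /p1 !catA => H.
  apply: holds_ext H _ => f x.
  rewrite /Dv /Ah /Bh (conv_math (fun s => u s f x) (fun r => v r f x) Hw Ht).
  rewrite Re_natC mulrAC mulfV ?mul1r // pnatr_eq0 expn_eq0 //.
move: S1 S2 S3 S4 S6; rewrite !sum_nat_const !card_ord !size_cat S0 S5 => S1 S2 S3 S4 S6.
rewrite -/n in S1 S2 S4 *; lia.
Qed.

End Conv.

Lemma sum_pick n c (F : nat -> R) : (c < n)%N ->
  \sum_(s < n) (if (s == c :> nat) then F s else 0) = F c.
Proof.
move=> Hc; rewrite -big_mkcond /= (big_pred1 (Ordinal Hc)) //.
Qed.

Lemma hankel_math (n D t : nat) (F : nat -> R) (Xv : nat -> R) :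
  (0 < D)%N -> (2 * D <= n)%N -> (t < D)%N ->
  \sum_(s < n) \sum_(r < n)
     (if ((s + r) %% n == t + D - 1)%N then F s * (if (r < D)%N then Xv (D - 1 - r)%N else 0) else 0)
  = \sum_(s < D) F (t + s)%N * Xv s.
Proof.
move=> HD Hn Ht; rewrite exchange_big /=.
transitivity (\sum_(r < n) (if (r < D)%N then F (t + D - 1 - r)%N * Xv (D - 1 - r)%N else 0)).
  apply: eq_bigr => r _; case: ifP => Hr; last first.
    by apply: big1 => s _; rewrite mulr0; case: ifP.
  rewrite -(@sum_pick n (t + D - 1 - r) (fun s => F s * Xv (D - 1 - r)%N)); last by lia.
  apply: eq_bigr => s _.
  have -> : ((s + r) %% n == t + D - 1)%N = (s == (t + D - 1 - r)%N :> nat).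
    have Hs := ltn_ord s.
    apply/eqP/eqP => H; last by rewrite H modn_small; lia.
    case: (ltnP (s + r) n) => Hsr; first by move: H; rewrite modn_small //; lia.
    move: H; rewrite -(subnK Hsr) modnDr modn_small; lia.
  done.
rewrite [RHS](reindex_inj rev_ord_inj) /=.
rewrite (big_ord_widen n (fun s => F (t + (D - s.+1))%N * Xv (D - s.+1)%N)); last by lia.
rewrite [RHS]big_mkcond /=; apply: eq_bigr => r _; case: ifP => // Hr.
have Hr' := ltn_ord r.
have -> : (t + D - 1 - r)%N = (t + (D - r.+1))%N by lia.
have -> : (D - 1 - r)%N = (D - r.+1)%N by lia.
by [].
Qed.

Section Hankel.
Variable L : nat.

Lemma hankel (D : nat) (p : seq (instr L)) (X : nat -> nat) (Xv : nat -> Sem L) :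
  (0 < D)%N -> (forall s, (s < D)%N -> holds p (X s) (Xv s)) ->
  exists q (o : nat -> nat), (forall t, (t < D)%N -> holds (p ++ q) (o t)
      (fun f x => \sum_(s < D) f (t + s)%N * Xv s f x)) /\
    (size q <= 200 * D * (trunc_log 2 D).+1)%N.
Proof.
move=> HD HX.
set lg := trunc_log 2 D.
have H1 : (2 ^ lg <= D)%N by apply: trunc_logP.
have H2 : (D < 2 ^ lg.+1)%N by apply: trunc_log_ltn.
set k := lg.+1.
set n := (2 ^ k.+1)%N.
have En : n = (4 * 2 ^ lg)%N by rewrite /n /k !expnS mulnA.
have E2 : (2 ^ lg.+1 = 2 * 2 ^ lg)%N by rewrite expnS.
have Hn1 : (2 * D <= n)%N by rewrite En; lia.
have Hn2 : (n <= 4 * D)%N by rewrite En; lia.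
have [q0 [z0 [H0 S0]]] := X_const p 0.
pose Out (a : nat) (r : nat) (p' : seq (instr L)) := holds p' r (fun f _ => f a).
have HO : forall t o p' q, Out t o p' -> Out t o (p' ++ q).
  by move=> t o p' q H; apply: holds_cat.
have Hs : forall t p', (t < n)%N -> True ->
    exists q o, Out t o (p' ++ q) /\ (size q <= (fun _ => 1%N) t)%N.
  move=> t p' _ _; have [q [r [B Sq]]] := X_query p' t.
  by exists q, r; rewrite Sq.
have [q1 [oq [Hq S1]]] := build_loop (Inv := fun _ => True) (fun _ _ _ => I) HO Hs 0%N (p := p ++ q0) I.
set p2 := (p ++ q0) ++ q1.
pose bb r := if (r < D)%N then X (D - 1 - r)%N else z0.
pose vv r : Sem L := fun f x => if (r < D)%N then Xv (D - 1 - r)%N f x else 0.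
have Ha : forall t, (t < 2 ^ k.+1)%N -> holds p2 (oq t) (fun f _ => f t) by [].
have Hb : forall t, (t < 2 ^ k.+1)%N -> holds p2 (bb t) (vv t).
  move=> t _; rewrite /bb /vv; case: ifP => Ht.
    by do 2 apply: holds_cat; apply: HX; lia.
  by apply: holds_cat; apply: holds_ext H0 _.
have [q2 [oc [Hc S2]]] := conv_build Ha Hb.
exists (q0 ++ q1 ++ q2), (fun t => oc (t + D - 1)%N); split.
  move=> t Ht; rewrite !catA; apply: holds_ext (Hc (t + D - 1)%N _) _; first by lia.
  move=> f x; exact: (hankel_math (fun s => f s) (fun s => Xv s f x) HD Hn1 Ht).
rewrite !size_cat S0; rewrite sum_nat_const card_ord in S1.
rewrite -/n in S1 S2.
have B1 : (k.+1 * n <= k.+1 * (4 * D))%N by rewrite leq_mul2l Hn2 orbT.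
have B2 : (k.+1 <= 2 * lg.+1)%N by rewrite /k; lia.
have B3 : (k.+1 * (4 * D) <= 2 * lg.+1 * (4 * D))%N by rewrite leq_mul2r B2 orbT.
have E1 : (18 * k.+1 * n = 18 * (k.+1 * n))%N by rewrite mulnA.
have E2' : (2 * lg.+1 * (4 * D) = 8 * (lg.+1 * D))%N.
  by rewrite mulnCA !mulnA (_ : (4 * 2 = 8)%N).
have E3 : (200 * D * lg.+1 = 200 * (lg.+1 * D))%N by rewrite -mulnA (mulnC D).
have B4 : (D <= lg.+1 * D)%N by rewrite leq_pmull.
move: S1 S2 B1 B3 B4; rewrite E1 E2' E3.
move: (k.+1 * n)%N (k.+1 * (4 * D))%N (lg.+1 * D)%N => X1 X2 X3.
lia.
Qed.

End Hankel.


Section Tree.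
Local Open Scope nat_scope.
Variable L : nat.
Variable e : rel 'I_L.
Hypothesis Htree : is_tree e.

Let eS : symmetric e. Proof. by case: Htree => _ [[]]. Qed.
Let eirr : irreflexive e. Proof. by case: Htree => _ [[]]. Qed.
Let econn : forall i j, connect e i j. Proof. by case: Htree => _ [_ []]. Qed.
Let eacyc : acyclic e. Proof. by case: Htree => _ [_ []]. Qed.

Notation d := (tree_dist e).

Lemma walk_lenP i j n :
  reflect (exists p : seq 'I_L, [/\ size p = n, path e i p & last i p = j])
          (walk_len e i j n).
Proof.
apply: (iffP existsP) => [[t /andP [H1 /eqP H2]]|[p [Hs H1 H2]]].
  by exists (val t); rewrite size_tuple.
have Hs' : size p == n by rewrite Hs.
by exists (Tuple Hs'); rewrite /= H1 H2 eqxx.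
Qed.

Lemma walk_short i j : exists p, [/\ path e i p, last i p = j & size p < L].
Proof.
have /connectP [p Hp ->] := econn i j.
case: (shortenP Hp) => p' Hp' Hu _.
exists p'; split=> //.
have := card_uniqP Hu; rewrite /= => Hc.
have := max_card (mem (i :: p')); rewrite Hc card_ord /=; lia.
Qed.

Lemma d_spec i j : walk_len e i j (d i j) /\ d i j < L.
Proof.
have [p [H1 H2 H3]] := walk_short i j.
have Hh : has (walk_len e i j) (iota 0 L).
  apply/hasP; exists (size p); first by rewrite mem_iota.
  by apply/walk_lenP; exists p.
have Hf : find (walk_len e i j) (iota 0 L) < size (iota 0 L) by rewrite -has_find.
rewrite size_iota in Hf.
split; last exact: Hf.
by have := nth_find 0 Hh; rewrite nth_iota.
Qed.

Lemma d_min i j n : walk_len e i j n -> d i j <= n.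
Proof.
move=> Hw; case: (ltnP n L) => Hn; last by have [_ H] := d_spec i j; lia.
rewrite leqNgt; apply/negP => Hlt.
have := before_find 0 Hlt; rewrite nth_iota // Hw //.
Qed.

Lemma d_le_path i p : path e i p -> d i (last i p) <= size p.
Proof. by move=> Hp; apply: d_min; apply/walk_lenP; exists p. Qed.

Lemma d_path i j : exists p, [/\ path e i p, last i p = j & size p = d i j].
Proof. by have [/walk_lenP [p [H1 H2 H3]] _] := d_spec i j; exists p. Qed.

Lemma d_refl i : d i i = 0.
Proof. by apply/eqP; rewrite -leqn0; exact: (@d_le_path i [::] isT). Qed.

Lemma d_eq0 i j : d i j = 0 -> i = j.
Proof.
move=> H0; have [[|v p] [_ H1 H]] := d_path i j; first by rewrite -H1.
by rewrite H0 in H.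
Qed.

Lemma d_tri i j k : d i k <= d i j + d j k.
Proof.
have [p [H1 H2 H3]] := d_path i j; have [q [H4 H5 H6]] := d_path j k.
have := @d_le_path i (p ++ q); rewrite cat_path last_cat H1 H2 H4 H5 size_cat H3 H6.
by apply.
Qed.

Lemma rev_walk i p : path e i p ->
  [/\ path e (last i p) (rev (belast i p)), last (last i p) (rev (belast i p)) = i,
      size (rev (belast i p)) = size p &
      forall v, (v \in last i p :: rev (belast i p)) = (v \in i :: p)].
Proof.
move=> Hp; split.
- rewrite rev_path; apply: sub_path Hp => a b; by rewrite eS.
- by case: p {Hp} => //= a p; rewrite rev_cons last_rcons.
- by rewrite size_rev size_belast.
- by move=> v; rewrite [i :: p]lastI mem_rcons !inE mem_rev.
Qed.

Lemma dC i j : d i j = d j i.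
Proof.
suff H : forall a b, d a b <= d b a by apply/eqP; rewrite eqn_leq !H.
move=> a b; have [p [H1 H2 H3]] := d_path b a.
have [R1 R2 R3 _] := rev_walk H1.
by rewrite -H3 -R3; have := d_le_path R1; rewrite R2 H2.
Qed.

Lemma d_edge i j : e i j -> d i j = 1.
Proof.
move=> Hij; apply/eqP; rewrite eqn_leq; apply/andP; split.
  by have := @d_le_path i [:: j]; rewrite /= Hij; apply.
rewrite lt0n; apply/eqP => /d_eq0 Eij; by move: Hij; rewrite Eij eirr.
Qed.

Lemma on_path i p v : path e i p -> v \in i :: p ->
  d i v + d v (last i p) <= size p.
Proof.
move=> Hp; rewrite inE => /orP [/eqP ->|Hv]; first by rewrite d_refl d_le_path.
case/splitPr: Hv Hp => p1 p2; rewrite cat_path last_cat /= => /andP [H1 /andP [H2 H3]].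
have := d_le_path H3; have := @d_le_path i (rcons p1 v).
by rewrite rcons_path H1 H2 last_rcons size_rcons size_cat /= => /(_ isT); lia.
Qed.

Definition avoid c i j := exists p, [/\ path e i p, last i p = j & c \notin i :: p].

Lemma avoid_sym c i j : avoid c i j -> avoid c j i.
Proof.
move=> [p [H1 H2 H3]]; have [R1 R2 _ R4] := rev_walk H1.
by exists (rev (belast i p)); rewrite -H2 R4.
Qed.

Lemma avoid_trans c i j k : avoid c i j -> avoid c j k -> avoid c i k.
Proof.
move=> [p [H1 H2 H3]] [q [H4 H5 H6]]; exists (p ++ q).
rewrite cat_path last_cat H2 H1 H4 H5; split=> //.
move: H3 H6; rewrite !inE mem_cat !negb_or => /andP [-> ->] /andP [_ ->] //.
Qed.

Lemma shortest_avoid c i j : d i j < d i c + d c j -> avoid c i j.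
Proof.
move=> H; have [p [H1 H2 H3]] := d_path i j; exists p; split=> //.
apply/negP => Hc; have := on_path H1 Hc; rewrite H2 H3; lia.
Qed.

Lemma path_avoid_sub c a p : path e a p -> c \notin a :: p ->
  path [rel u v | e u v && (u != c) && (v != c)] a p.
Proof.
elim: p a => //= b p IH a /andP [Hab Hp]; rewrite !inE => /norP [Ha /norP [Hb Hp']].
rewrite Hab eq_sym Ha eq_sym Hb /=; apply: IH => //; by rewrite inE negb_or Hb.
Qed.

Lemma K c a b : e c a -> e c b -> avoid c a b -> a = b.
Proof.
move=> Ha Hb [p [H1 H2 H3]]; apply/eqP; apply/negP => /negP Hab.
have Hp' := path_avoid_sub H1 H3.
case: (shortenP Hp') H2 => p' Hp'' Hu Hsub Hlast.
have Hc : c \notin a :: p'.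
  move: H3; rewrite !inE !negb_or => /andP [-> Hn] /=; apply/negP => /Hsub; by apply/negP.
have Hne : p' != [::] by apply/eqP => E; move: Hlast Hab; rewrite E /= => ->; rewrite eqxx.
have Hcyc : forall s, uniq s -> 2 < size s -> ~~ cycle e s := eacyc.
have := Hcyc (c :: a :: p'); rewrite [uniq (c :: _)]cons_uniq Hc Hu /=.
have -> : 2 < (size p').+2 by case: p' Hne {Hp'' Hu Hsub Hlast Hc}.
move=> /(_ isT isT); rewrite Ha /= rcons_path Hlast (eS b c) Hb andbT.
by rewrite (sub_path _ Hp'') // => u v /andP [/andP []].
Qed.

Definition nb c w : 'I_L :=
  if [pick n | e c n && ((d n w).+1 == d c w)] is Some n then n else c.

Lemma nb_spec c w : w != c -> e c (nb c w) /\ (d (nb c w) w).+1 = d c w.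
Proof.
move=> Hw; rewrite /nb; case: pickP => [n /andP [H1 /eqP H2] //|Hn].
exfalso; have [p [H1 H2 H3]] := d_path c w.
case: p H1 H2 H3 => [|n p] /=; first by move=> _ E; move: Hw; rewrite E eqxx.
move=> /andP [Hcn Hp] Hl Hs.
have := Hn n; rewrite Hcn /=.
have := d_le_path Hp; rewrite Hl => H.
have := d_tri c n w; rewrite (d_edge Hcn) => H'.
by move/negP; apply; apply/eqP; lia.
Qed.

Lemma nb_uniq c w a : e c a -> (d a w).+1 = d c w -> a = nb c w.
Proof.
move=> Ha Hd.
have Hw : w != c by apply/eqP => E; move: Hd; rewrite E d_refl.
have [Hb Hdb] := nb_spec Hw.
apply: (K Ha Hb); apply: (avoid_trans (j := w)).
  by apply: shortest_avoid; rewrite (dC a c) (d_edge Ha); lia.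
apply: avoid_sym; apply: shortest_avoid; rewrite (dC _ c) (d_edge Hb); lia.
Qed.

Lemma cross c w v : w != c -> v != c -> nb c w != nb c v -> d w v = d w c + d c v.
Proof.
move=> Hw Hv Hne; apply/eqP; rewrite eqn_leq d_tri /= leqNgt; apply/negP => Hlt.
have [Ha Hda] := nb_spec Hw; have [Hb Hdb] := nb_spec Hv.
move/negP: Hne; apply; apply/eqP; apply: (K Ha Hb).
apply: (avoid_trans (j := w)).
  by apply: shortest_avoid; rewrite (dC _ c) (d_edge Ha); lia.
apply: (avoid_trans (shortest_avoid Hlt)).
apply: avoid_sym; apply: shortest_avoid; rewrite (dC _ c) (d_edge Hb); lia.
Qed.

Lemma same_cls c w v : w != c -> v != c -> nb c w = nb c v ->
  d w v + 2 <= d w c + d c v.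
Proof.
move=> Hw Hv E; have [_ Hda] := nb_spec Hw; have [_ Hdb] := nb_spec Hv.
have := d_tri w (nb c w) v; rewrite [d w (nb c w)]dC E; rewrite E in Hda.
rewrite [d w c]dC; lia.
Qed.

Definition conv (S : {set 'I_L}) :=
  forall u v w, u \in S -> v \in S -> d u w + d w v = d u v -> w \in S.

Definition cls c a (S : {set 'I_L}) := [set w in S | (w != c) && (nb c w == a)].

Lemma conv_cls S c a : conv S -> conv (cls c a S).
Proof.
move=> HS u v w; rewrite !inE => /andP [Hu /andP [Huc /eqP Hua]]
   /andP [Hv /andP [Hvc /eqP Hva]] Hb.
rewrite (HS u v w Hu Hv Hb) /=.
have Hs := same_cls Huc Hvc (etrans Hua (esym Hva)).
have Hwc : w != c by apply/eqP => E; move: Hb Hs; rewrite E; lia.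
rewrite Hwc /=; apply/negPn/negP => Hn.
have H1 := cross Huc Hwc (ltac:(by rewrite Hua eq_sym Hn)).
have H2 := cross Hwc Hvc (ltac:(by rewrite Hva Hn)).
move: Hb Hs; rewrite H1 H2; lia.
Qed.

Lemma depth_bound S c j : conv S -> c \in S -> j \in S -> d c j < #|S|.
Proof.
move=> HS Hc Hj; have [p [H1 H2 H3]] := d_path c j.
have Hin : {subset c :: p <= S}.
  move=> v Hv; apply: (HS c j v Hc Hj).
  have := on_path H1 Hv; rewrite H2 H3 => H; have := d_tri c v j; lia.
case: (shortenP H1) H2 => p' Hp' Hu Hsub Hl.
have := d_le_path Hp'; rewrite Hl => Hd.
have Hsub' : {subset c :: p' <= S}.
  move=> v; rewrite inE => /orP [/eqP ->|/Hsub Hv]; first exact: Hc.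
  by apply: Hin; rewrite inE Hv orbT.
have Hss : (c :: p') \subset S by apply/subsetP.
have := subset_leq_card Hss.
by rewrite (card_uniqP Hu) /=; lia.
Qed.

Lemma nb_self c a : e c a -> nb c a = a.
Proof. by move=> Ha; rewrite -(nb_uniq Ha) // d_refl d_edge. Qed.

Lemma cls_nb_in S c a w : conv S -> c \in S -> w \in cls c a S -> a \in cls c a S.
Proof.
move=> HS Hc; rewrite !inE => /andP [Hw /andP [Hwc /eqP Ha]].
have [Hca Hd] := nb_spec Hwc; rewrite Ha in Hca Hd.
rewrite (HS c w a Hc Hw); last by rewrite d_edge.
rewrite nb_self // eqxx andbT; apply/eqP => E; by move: Hca; rewrite E eirr.
Qed.

Lemma cls_depth S c a j : conv S -> c \in S -> j \in cls c a S -> d c j <= #|cls c a S|.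
Proof.
move=> HS Hc Hj.
have Ha := cls_nb_in HS Hc Hj.
have := depth_bound (conv_cls (c := c) (a := a) HS) Ha Hj.
move: Hj; rewrite inE => /andP [_ /andP [Hjc /eqP E]].
have [_ Hd] := nb_spec Hjc; rewrite E in Hd; lia.
Qed.

Lemma cls_sub S c a : cls c a S \subset S.
Proof. by apply/subsetP => w; rewrite inE => /andP []. Qed.

Lemma cls_sum S c : \sum_(a < L) #|cls c a S| <= #|S|.
Proof.
have E : \sum_(a < L) #|cls c a S| =
         \sum_(w | (w \in S) && (w != c)) 1.
  rewrite [RHS](partition_big (nb c) predT) //=; apply: eq_big => // a _.
  rewrite -sum1_card; apply: eq_bigl => w; by rewrite !inE andbA.
rewrite E sum1_card; apply: subset_leq_card; by apply/subsetP => w; rewrite unfold_in => /andP [].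

Qed.

Definition maxcls c S := \max_(a < L) #|cls c a S|.

Lemma centroid S : conv S -> S != set0 ->
  exists c, c \in S /\ forall a, 2 * #|cls c a S| <= #|S|.
Proof.
move=> HS /set0Pn [c0 Hc0].
case: (arg_minnP (fun c => maxcls c S) Hc0) => c Hc Hmin.
exists c; split=> // a; rewrite leqNgt; apply/negP => Hbig.
have /card_gt0P [w Hw] : 0 < #|cls c a S| by lia.
have HaK := cls_nb_in HS Hc Hw.
have Ha : a \in S by move: HaK; rewrite inE => /andP [].
move: HaK; rewrite inE => /andP [_ /andP [Hac /eqP _]].
move: Hw; rewrite inE => /andP [_ /andP [Hwc /eqP Hwa]].
have [Hca _] := nb_spec Hwc; rewrite Hwa in Hca.
have Hac' : c != a by rewrite eq_sym.
have Hnbac : nb a c = c by rewrite nb_self // eS.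
have HK : forall b, #|cls a b S| < #|cls c a S|.
  move=> b; case: (eqVneq b c) => [->|Hbc].
    have Hsub : cls a c S \subset S :\: cls c a S.
      apply/subsetP => v; rewrite !inE => /andP [Hv /andP [Hva /eqP Hvc]].
      rewrite Hv /= ?andbT; apply/negP => /andP [Hvc' /eqP Hvac].
      have [_ D1] := nb_spec Hva; have [_ D2] := nb_spec Hvc'.
      rewrite Hvc in D1; rewrite Hvac in D2; lia.
    have := subset_leq_card Hsub; rewrite cardsD (setIidPr (cls_sub _ _ _)); lia.
  have Hsub : cls a b S \subset cls c a S :\ a.
    apply/subsetP => v; rewrite !inE => /andP [Hv /andP [Hva /eqP Hvb]].
    rewrite Hva Hv /=.
    have Hvc : v != c by apply/eqP => E; move: Hbc; rewrite -Hvb E Hnbac eqxx.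
    rewrite Hvc /=; apply/eqP; apply: esym; apply: nb_uniq => //.
    have Hx := cross Hva Hac'; rewrite Hnbac Hvb in Hx.
    have Hac2 : e a c by rewrite eS.
    by rewrite (dC c v) (Hx Hbc) (d_edge Hac2) (dC v a) addn1.
  have := subset_leq_card Hsub; rewrite (cardsD1 a (cls c a S)).
  have -> : a \in cls c a S by rewrite !inE Ha Hac nb_self // eqxx.
  by move=> H; rewrite /= add1n ltnS.
have : maxcls a S < maxcls c S.
  apply: (@leq_ltn_trans (#|cls c a S|).-1).
    apply/bigmax_leqP => b _; have := HK b; lia.
  have : #|cls c a S| <= maxcls c S by apply: (leq_bigmax_cond (F := fun a => #|cls c a S|)).
  lia.
have := Hmin a Ha; lia.
Qed.

End Tree.


Section Bucket.
Variable L : nat.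

Lemma sum_inputs (p : seq (instr L)) (J : seq 'I_L) :
  exists q r, holds (p ++ q) r (fun _ x => \sum_(j <- J) x j) /\
    (size q <= 2 * size J + 1)%N.
Proof.
elim: J p => [|j J IH] p.
  have [q [r [H S]]] := X_const p 0.
  exists q, r; rewrite S; split=> //; apply: holds_ext H _ => f x; by rewrite big_nil.
have [q1 [r1 [H1 S1]]] := IH p.
have [q2 [r2 [H2 S2]]] := X_input (p ++ q1) j.
have [q3 [r3 [H3 S3]]] := X_add H2 (holds_cat q2 H1).
exists (q1 ++ q2 ++ q3), r3; rewrite !catA; split.
  by apply: holds_ext H3 _ => f x; rewrite big_cons.
rewrite !size_cat S2 S3 /=; lia.
Qed.

Lemma hank_set (P : {set 'I_L}) (dep : 'I_L -> nat) (D : nat) (p : seq (instr L)) :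
  (0 < D)%N -> (forall j, j \in P -> (dep j < D)%N) ->
  exists q (o : nat -> nat), (forall t, (t < D)%N -> holds (p ++ q) (o t)
      (fun f x => \sum_(j in P) f (t + dep j)%N * x j)) /\
    (size q <= 200 * D * (trunc_log 2 D).+1 + 2 * #|P| + D)%N.
Proof.
move=> HD Hdep.
pose A s := [pred j | (j \in P) && (dep j == s)].
pose Inv (p' : seq (instr L)) := True.
pose Out s (r : nat) (p' : seq (instr L)) :=
  holds p' r (fun _ x => \sum_(j <- enum (A s)) x j).
have HO : forall t o p' q, Out t o p' -> Out t o (p' ++ q).
  by move=> t o p' q H; apply: holds_cat.
have Hs : forall t p', (t < D)%N -> Inv p' ->
    exists q o, Out t o (p' ++ q) /\ (size q <= (fun s => 2 * #|A s| + 1) t)%N.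
  move=> t p' _ _; have [q [r [H S]]] := sum_inputs p' (enum (A t)).
  by exists q, r; rewrite cardE.
have [q1 [oX [HX S1]]] := build_loop (Inv := Inv) (fun _ _ _ => I) HO Hs 0%N (p := p) I.
have [q2 [o [Ho S2]]] := hankel HD HX.
exists (q1 ++ q2), o; split.
  move=> t Ht; rewrite catA; apply: holds_ext (Ho t Ht) _ => f x.
  transitivity (\sum_(s < D) \sum_(j in A s) f (t + dep j)%N * x j).
    apply: eq_bigr => s _; rewrite big_enum /= big_distrr /=.
    apply: eq_bigr => j /andP [_ /eqP ->] //.
  rewrite (partition_big (fun j => insubd (Ordinal HD) (dep j)) predT) //=.
  apply: eq_bigr => s _; apply: eq_bigl => j; rewrite /A !inE.
  case Hj: (j \in P) => //=.
  have Hd := Hdep j Hj.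
  by rewrite -(inj_eq val_inj) val_insubd Hd.
rewrite size_cat.
have : (\sum_(s < D) (2 * #|A s| + 1) <= 2 * #|P| + D)%N.
  rewrite big_split /= sum_nat_const card_ord muln1 -big_distrr /= leq_add2r leq_mul2l /=.
  rewrite -sum1_card (partition_big (fun j => insubd (Ordinal HD) (dep j)) predT) //=.
  apply: leq_sum => s _; rewrite -sum1_card big_mkcond [X in (_ <= X)%N]big_mkcond /=.
  apply: leq_sum => j _; case: ifP => // Hj; rewrite ifT //.
  move: Hj; rewrite /A !inE => /andP [Hj /eqP Hs2].
  by rewrite Hj /= -(inj_eq val_inj) val_insubd Hdep // Hs2.
lia.
Qed.

End Bucket.

Lemma lg_half k m : (1 <= k)%N -> (2 * k <= m)%N -> ((trunc_log 2 k).+1 <= trunc_log 2 m)%N.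
Proof.
move=> Hk Hm; apply: trunc_log_max => //.
rewrite expnS; have := trunc_logP (isT : (1 < 2)%N) Hk; lia.
Qed.

Lemma lg_mono k m : (k <= m)%N -> (trunc_log 2 k <= trunc_log 2 m)%N.
Proof. exact: leq_trunc_log. Qed.

Lemma insubd_ord L (c i : 'I_L) : insubd c (nat_of_ord i) = i.
Proof. by apply: val_inj; rewrite val_insubd ltn_ord. Qed.

Section Main.
Variable L : nat.
Variable e : rel 'I_L.
Hypothesis Ht : is_tree e.
Local Notation d := (tree_dist e).

Definition yv (S : {set 'I_L}) (i : 'I_L) : Sem L :=
  fun f x => \sum_(j in S) f (d i j) * x j.

Lemma combine_math (S : {set 'I_L}) c a i (f : nat -> R) (x : 'I_L -> R) :
  c \in S -> i \in cls e c a S ->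
  \sum_(j in S) f (d c i + d c j)%N * x j - \sum_(j in cls e c a S) f (d c i + d c j)%N * x j
  + \sum_(j in cls e c a S) f (d i j) * x j = \sum_(j in S) f (d i j) * x j.
Proof.
move=> Hc Hi; set K := cls e c a S.
have HKS : K \subset S by apply: cls_sub.
rewrite [X in X - _ + _](big_setID K) [RHS](big_setID K) /= (setIidPr HKS).
have -> : \sum_(j in S :\: K) f (d c i + d c j)%N * x j = \sum_(j in S :\: K) f (d i j) * x j.
  apply: eq_bigr => j; rewrite !inE => /andP [Hj HjS].
  move: Hi; rewrite !inE => /andP [HiS /andP [Hic /eqP Hia]].
  case: (eqVneq j c) => [->|Hjc].
    by rewrite (d_refl Ht) addn0 (dC Ht).
  move: Hj; rewrite HjS Hjc /= => Hja.
  rewrite (cross Ht Hic Hjc); last by rewrite Hia eq_sym.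
  by rewrite (dC Ht i c).
ring.
Qed.

Lemma main_rec n : forall S : {set 'I_L}, (#|S| <= n)%N -> conv e S ->
  forall p : seq (instr L), exists q (o : 'I_L -> nat),
    (forall i, i \in S -> holds (p ++ q) (o i) (yv S i)) /\
    (size q <= 1000 * #|S| * (trunc_log 2 #|S|).+1 ^ 2)%N.
Proof.
elim: n => [|n IH] S HS Hconv p.
  exists [::], (fun _ => 0%N); split; last by [].
  move=> i Hi; have : (0 < #|S|)%N by apply/card_gt0P; exists i.
  lia.
case: (set_0Vmem S) => [->|[c0 Hc0]].
  by exists [::], (fun _ => 0%N); split=> // i; rewrite inE.
have HS0 : S != set0 by apply/set0Pn; exists c0.
have [c [Hc Hcen]] := centroid Ht Hconv HS0.
set m := #|S|.
have Hm0 : (0 < m)%N by apply/card_gt0P; exists c.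
set lm := trunc_log 2 m.
pose Gv t : Sem L := fun f x => \sum_(j in S) f (t + d c j)%N * x j.
have [q1 [oG [HG S1]]] := @hank_set L S (fun j => d c j) m p Hm0
   (fun j Hj => depth_bound Ht Hconv Hc Hj).
pose coef := (406 * lm.+1 + 1000 * lm ^ 2)%N.
pose Inv (p' : seq (instr L)) := forall t, (t < m)%N -> holds p' (oG t) (Gv t).
pose Out (t : nat) (o : 'I_L -> nat) (p' : seq (instr L)) :=
  forall i, i \in cls e c (insubd c t) S -> holds p' (o i) (yv S i).
have HI : forall p' q, Inv p' -> Inv (p' ++ q).
  by move=> p' q H t Htm; apply: holds_cat; apply: H.
have HO : forall t o p' q, Out t o p' -> Out t o (p' ++ q).
  by move=> t o p' q H i Hi; apply: holds_cat; apply: H.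
have Hs : forall t p', (t < L)%N -> Inv p' -> exists q o, Out t o (p' ++ q) /\
    (size q <= (fun t => coef * #|cls e c (insubd c t) S|) t)%N.
  move=> t p' _ Hp'; set a := insubd c t; set K := cls e c a S; set k := #|K|.
  case: (posnP k) => Hk.
    exists [::], (fun _ => 0%N); split; last by rewrite Hk muln0.
    move=> i Hi; have : (0 < k)%N by apply/card_gt0P; exists i.
    by rewrite Hk.
  have HKconv : conv e K by apply: conv_cls.
  have H2k : (2 * k <= m)%N by apply: Hcen.
  have [q2 [oH [HH S2]]] := @hank_set L K (fun j => d c j) k.+1 p' (ltn0Sn k)
     (fun j Hj => cls_depth Ht Hconv Hc Hj).
  have HKn : (#|K| <= n)%N by rewrite -/k; lia.
  have [q3 [oR [HR S3]]] := IH K HKn HKconv (p' ++ q2).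
  pose Hv t : Sem L := fun f x => \sum_(j in K) f (t + d c j)%N * x j.
  pose Inv' (p'' : seq (instr L)) := [/\ Inv p'',
       forall t, (t < k.+1)%N -> holds p'' (oH t) (Hv t)
     & forall i, i \in K -> holds p'' (oR i) (yv K i)].
  pose Out' (u : nat) (r : nat) (p'' : seq (instr L)) :=
     insubd c u \in K -> holds p'' r (yv S (insubd c u)).
  have HI' : forall p'' q, Inv' p'' -> Inv' (p'' ++ q).
    move=> p'' q [H1 H2 H3]; split; first exact: HI.
      by move=> t0 Ht0; apply: holds_cat; apply: H2.
    by move=> i Hi; apply: holds_cat; apply: H3.
  have HO' : forall t o p'' q, Out' t o p'' -> Out' t o (p'' ++ q).
    by move=> t0 o p'' q H Hi; apply: holds_cat; apply: H.
  have Hs' : forall u p'', (u < L)%N -> Inv' p'' -> exists q r, Out' u r (p'' ++ q) /\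
      (size q <= (fun u => if insubd c u \in K then 2 else 0) u)%N.
    move=> u p'' _ [H1 H2 H3] /=; case: ifP => Hin; last first.
      by exists [::], 0%N; split=> //; rewrite /Out' Hin.
    set i := insubd c u.
    have Hdi : (d c i < k.+1)%N := cls_depth Ht Hconv Hc Hin.
    have HiS : i \in S by move: Hin; rewrite inE => /andP [].
    have Hdm : (d c i < m)%N := depth_bound Ht Hconv Hc HiS.
    have [q5 [r5 [H5 S5]]] := X_sub (H1 _ Hdm) (H2 _ Hdi).
    have [q6 [r6 [H6 S6]]] := X_add H5 (holds_cat q5 (H3 _ Hin)).
    exists (q5 ++ q6), r6; split; last by rewrite size_cat S5 S6.
    move=> _; rewrite catA; apply: holds_ext H6 _ => f x.
    exact: (combine_math f x Hc Hin).
  have Hinv' : Inv' ((p' ++ q2) ++ q3).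
    split.
    - by move=> t0 Ht0; do 2 apply: holds_cat; apply: Hp'.
    - by move=> t0 Ht0; apply: holds_cat; apply: HH.
    - exact: HR.
  have [q4 [oC [HC S4]]] := build_loop HI' HO' Hs' 0%N Hinv'.
  exists (q2 ++ q3 ++ q4), (fun i => oC (nat_of_ord i)); split.
    move=> i Hi; rewrite !catA; have := HC (nat_of_ord i) (ltn_ord i).
    by rewrite /Out' insubd_ord; apply.
  have S4' : (size q4 <= 2 * k)%N.
    move: S4; rewrite (eq_bigr (fun u : 'I_L => if u \in K then 2%N else 0%N)); last first.
      by move=> u _; rewrite insubd_ord.
    by rewrite -big_mkcond /= sum_nat_const mulnC.
  have Hk1 : (k.+1 <= m)%N by lia.
  have L1 : (trunc_log 2 k.+1 <= lm)%N by apply: lg_mono.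
  have L2 : ((trunc_log 2 k).+1 <= lm)%N by apply: lg_half.
  have A1 : (k.+1 * (trunc_log 2 k.+1).+1 <= 2 * (k * lm.+1))%N.
    rewrite mulnA; apply: leq_mul; lia.
  have A2 : (k * (trunc_log 2 k).+1 ^ 2 <= k * lm ^ 2)%N.
    by apply: leq_mul => //; rewrite leq_exp2r.
  have A3 : (k <= k * lm.+1)%N by rewrite leq_pmulr.
  have E1 : (200 * k.+1 * (trunc_log 2 k.+1).+1 = 200 * (k.+1 * (trunc_log 2 k.+1).+1))%N.
    by rewrite mulnA.
  have E2 : (1000 * k * (trunc_log 2 k).+1 ^ 2 = 1000 * (k * (trunc_log 2 k).+1 ^ 2))%N.
    by rewrite mulnA.
  have E3 : (coef * k = 406 * (k * lm.+1) + 1000 * (k * lm ^ 2))%N.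
    rewrite /coef; ring.
  move: S2 S3; rewrite -/k E1 E2 !size_cat E3 => S2 S3.
  move: S2 S3 S4' A1 A2 A3.
  move: (k.+1 * (trunc_log 2 k.+1).+1)%N (k * (trunc_log 2 k).+1 ^ 2)%N
        (k * lm.+1)%N (k * lm ^ 2)%N => X1 X2 Y1 Y2.
  lia.
have [q5 [oL [HL S5]]] := build_loop HI HO Hs (fun _ => 0%N) (p := p ++ q1) HG.
exists (q1 ++ q5), (fun i => if i == c then oG 0%N else oL (nat_of_ord (nb e c i)) i); split.
  move=> i Hi; case: (eqVneq i c) => [->|Hic].
    rewrite catA; apply: holds_ext (holds_cat q5 (HG 0%N Hm0)) _ => f x.
    by apply: eq_bigr => j _; rewrite add0n.
  rewrite catA; have := HL (nat_of_ord (nb e c i)) (ltn_ord _); rewrite /Out insubd_ord; apply.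
  by rewrite inE Hi Hic eqxx.
have S5' : (size q5 <= coef * m)%N.
  apply: (leq_trans S5); rewrite -big_distrr /= leq_mul2l; apply/orP; right.
  rewrite (eq_bigr (fun a : 'I_L => #|cls e c a S|)); last by move=> a _; rewrite insubd_ord.
  exact: cls_sum.
have E4 : (coef * m = 406 * (m * lm) + 406 * m + 1000 * (m * lm ^ 2))%N.
  rewrite /coef; ring.
have E5 : (1000 * m * lm.+1 ^ 2 = 1000 * (m * lm ^ 2) + 2000 * (m * lm) + 1000 * m)%N.
  ring.
have E6 : (200 * m * lm.+1 = 200 * (m * lm) + 200 * m)%N by ring.
rewrite size_cat E5; move: S1 S5'; rewrite E4 E6.
move: (m * lm)%N (m * lm ^ 2)%N => X1 X2; lia.
Qed.

End Main.


Lemma main_tree L (e : rel 'I_L) : is_tree e ->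
  exists P : slp L, computes_mask_mv e P /\
    (cost P <= 1000 * L * (trunc_log 2 L).+1 ^ 2)%N.
Proof.
move=> Ht.
have Hconv : conv e [set: 'I_L] by move=> u v w _ _ _; rewrite inE.
have [q [o [Ho Sq]]] := main_rec Ht (leqnn #|[set: 'I_L]|) Hconv [::].
exists (SLP q o); split; last by move: Sq; rewrite cardsT card_ord.
move=> f x i; have [_ H] := Ho i (in_setT i); rewrite /= in H; rewrite H /yv /mask_mv.
rewrite (eq_bigl (fun j => true)) // => j; by rewrite inE.
Qed.

Lemma growth_aux u : ((u + 13) * (u + 13) * (u + 13) <= 2 ^ (u + 12))%N.
Proof.
elim: u => [|u IH]; first by [].
have E : (u.+1 + 13 = u + 14)%N by lia.
have E2 : (u.+1 + 12 = (u + 12).+1)%N by lia.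
rewrite E E2 expnS.
have H : ((u + 14) * (u + 14) * (u + 14) <= 2 * ((u + 13) * (u + 13) * (u + 13)))%N by nia.
move: IH H; move: (2 ^ (u + 12))%N => P; lia.
Qed.

Lemma growth K : exists t0, forall t, (t0 <= t)%N -> (K * t.+1 ^ 2 <= 2 ^ t)%N.
Proof.
exists (maxn 12 K) => t Ht.
have [u Eu] : exists u, t = (u + 12)%N by exists (t - 12)%N; lia.
have := growth_aux u; rewrite -Eu.
have : (K * t.+1 ^ 2 <= t.+1 * t.+1 ^ 2)%N by rewrite leq_mul2r; apply/orP; right; lia.
have -> : (t.+1 * t.+1 ^ 2 = (u + 13) * (u + 13) * (u + 13))%N by rewrite Eu; ring.
lia.
Qed.

Lemma pow2E x : Nat.pow x 2 = (x ^ 2)%N.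
Proof. by rewrite /= multE muln1. Qed.

Lemma sq_bound t : (1 <= t)%N -> (expn t.+1 2 <= 4 * expn t 2)%N.
Proof.
move=> Ht1; rewrite !expnS !expn0 !muln1.
have Htt : (t <= t * t)%N by rewrite leq_pmulr.
have -> : (t.+1 * t.+1 = t * t + 2 * t + 1)%N by rewrite mulSnr mulnSr; lia.
move: Htt; move: (t * t)%N => T; lia.
Qed.

Lemma final_bound L t : (1 <= t)%N ->
  (1000 * L * expn t.+1 2 <= 4000 * L * expn t 2)%N.
Proof.
move=> Ht; have H := sq_bound Ht.
apply: (leq_trans (leq_mul (leqnn (1000 * L)%N) H)).
by rewrite (_ : (1000 * L * (4 * expn t 2) = 4000 * L * expn t 2)%N) //; ring.
Qed.

Lemma tract_bound k L t : (1000 * k * expn t.+1 2 <= expn 2 t)%N -> (expn 2 t <= L)%N ->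
  (k * (1000 * L * expn t.+1 2) <= Nat.pow L 2)%N.
Proof.
move=> H1 H2; rewrite pow2E.
have -> : (k * (1000 * L * expn t.+1 2) = L * (1000 * k * expn t.+1 2))%N by ring.
rewrite expnS expn1 leq_mul2l; apply/orP; right; exact: leq_trans H1 H2.
Qed.

Close Scope complex_scope.
Close Scope ring_scope.
From mathcomp Require Import all_boot.
From Stdlib Require Import Reals.

Theorem lemma6p1 :
  (exists C : nat,
     forall (L : nat) (e : rel 'I_L), 2 <= L -> is_tree e ->
       exists P : slp L, computes_mask_mv e P /\
         cost P <= C * L * (trunc_log 2 L) ^ 2)
  /\ tractable_trees.
Proof.
split.
  exists 4000%N => L e HL Ht.
  have [P [HP HC]] := main_tree Ht; exists P; split => //.
  rewrite pow2E; apply: (leq_trans HC).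
  apply: final_bound; exact: trunc_log_max.
exists (fun L => 1000 * L * expn (trunc_log 2 L).+1 2)%N; split; last first.
  by move=> L e Ht; apply: main_tree.
move=> k Hk; have [t0 Ht0] := growth (1000 * k).
exists (expn 2 t0) => L HL.
have HL0 : (0 < L)%N by apply: leq_trans HL; rewrite expn_gt0.
have Ht : (t0 <= trunc_log 2 L)%N by apply: trunc_log_max.
have H2 : (expn 2 (trunc_log 2 L) <= L)%N by apply: trunc_logP.
exact: tract_bound (Ht0 _ Ht) H2.
Qed.
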